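(* Let $w\in W$. The map $\varkappa^w:T^w\to W^w$, $\Theta\mapsto w_\Theta$, is an order reversing bijection, where $T^w$ is ordered by inclusion and $W^w$ by the Bruhat order.
   Context: Let $\Phi$ be a finite root system with positive roots $\Phi^+$, negative roots $\Phi^-$, Weyl group $W$ with length function $\ell$ and Bruhat order, $W$-invariant scalar product $(\cdot,\cdot)$, reflections $s_\beta$. For $w\in W$, $\Phi^+_w=\{\beta\in\Phi^+\,|\,w^{-1}\beta\in\Phi^-\}$. For pairwise orthogonal $\Theta\subseteq\Phi^+$, $w_\Theta=(\prod_{\beta\in\Theta}s_\beta)w$. $T^w$ is the set of subsets $\Theta\subseteq\Phi^+_w$ consisting of pairwise orthogonal roots with $\ell(w_\Theta)=\ell(w)-|\Theta|$, and $W^w=\{w_\Theta\,|\,\Theta\in T^w\}$. *)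

(* Defs.v *)
From Stdlib Require Import ClassicalEpsilon Relation_Operators.
From HB Require Import structures.
From mathcomp Require Import all_boot all_order all_algebra.
Set Implicit Arguments. Unset Strict Implicit. Unset Printing Implicit Defensive.
Import Order.TTheory GRing.Theory Num.Theory.
Local Open Scope ring_scope.

(* Vectors of the Euclidean space V = R^n are column vectors 'cV[R]_n;
   linear maps (Weyl group elements) are matrices acting on the left. *)

Definition dot (R : realFieldType) (n : nat) (u v : 'cV[R]_n) : R :=
  (u^T *m v) 0 0.

(* reflection s_a : v |-> v - 2 (v,a)/(a,a) a, as a matrix *)
Definition refl (R : realFieldType) (n : nat) (a : 'cV[R]_n) : 'M[R]_n :=
  1%:M - ((2 : R) / dot a a) *: (a *m a^T).

Record rootSystem (R : realFieldType) (n : nat) := RootSystem {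
  rs_roots : seq 'cV[R]_n;
  rs_uniq : uniq rs_roots;
  rs_nz : 0 \notin rs_roots;
  rs_refl : forall a b, a \in rs_roots -> b \in rs_roots -> refl a *m b \in rs_roots;
  rs_cryst : forall a b, a \in rs_roots -> b \in rs_roots ->
     exists z : int, (2 : R) * dot a b / dot b b = z%:~R;
  rs_reduced : forall a (c : R), a \in rs_roots -> c *: a \in rs_roots ->
     c = 1 \/ c = -1
}.

Section RS.
Variables (R : realFieldType) (n : nat) (Phi : rootSystem R n).

(* rs_roots as a finite type, so that subsets of rs_roots are finite sets *)
Definition rsroot := seq_sub (rs_roots Phi).

Inductive inW : 'M[R]_n -> Prop :=
| inW1 : inW 1%:M
| inWs : forall a w, a \in rs_roots Phi -> inW w -> inW (refl a *m w).

(* positive system determined by a generic vector g: Phi+ = {a | (g,a) > 0} *)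
Variable g : 'cV[R]_n.
Definition pos (a : 'cV[R]_n) : bool := (a \in rs_roots Phi) && (0 < dot g a).
Definition neg (a : 'cV[R]_n) : bool := pos (- a).

Definition simple (a : 'cV[R]_n) : Prop :=
  pos a /\ ~ (exists b c, pos b /\ pos c /\ a = b + c).

Definition wordlen (w : 'M[R]_n) (k : nat) : Prop :=
  exists s : seq 'cV[R]_n, size s = k /\ (forall a, a \in s -> simple a) /\
    w = foldr (fun a m => refl a *m m) 1%:M s.

Definition len (w : 'M[R]_n) : nat :=
  epsilon (inhabits 0%N)
    (fun k => wordlen w k /\ forall j, wordlen w j -> (k <= j)%N).

Definition bruhat_step (u v : 'M[R]_n) : Prop :=
  exists b, pos b /\ v = refl b *m u /\ (len u < len v)%N.
Definition bruhat_le : 'M[R]_n -> 'M[R]_n -> Prop :=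
  clos_refl_trans 'M[R]_n bruhat_step.

Definition posw (w : 'M[R]_n) (b : 'cV[R]_n) : bool :=
  pos b && neg (invmx w *m b).

Definition wTheta (w : 'M[R]_n) (T : {set rsroot}) : 'M[R]_n :=
  (\big[mulmx/1%:M]_(b in T) refl (val b)) *m w.

Definition Tw (w : 'M[R]_n) (T : {set rsroot}) : Prop :=
  (forall b, b \in T -> posw w (val b)) /\
  (forall b c, b \in T -> c \in T -> b != c -> dot (val b) (val c) = 0) /\
  (len (wTheta w T) + #|T| = len w)%N.

Definition Ww (w u : 'M[R]_n) : Prop := exists T, Tw w T /\ u = wTheta w T.

End RS.

Arguments Tw [R n] Phi g w T.
Arguments wTheta [R n] Phi w T.

(* Main.v *)
Require Import Defs.
From Stdlib Require Import ClassicalEpsilon Relation_Operators Classical.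
From HB Require Import structures.
From mathcomp Require Import all_boot all_order all_algebra.
From mathcomp Require Import zify ring lra.
Set Implicit Arguments. Unset Strict Implicit. Unset Printing Implicit Defensive.
Import Order.TTheory GRing.Theory Num.Theory.
Local Open Scope ring_scope.

Section Lin.
Variables (R : realFieldType) (n : nat).
Implicit Types (u v x y a b : 'cV[R]_n) (M : 'M[R]_n).

Lemma trmx_cV_mul u v : u^T *m v = (dot u v)%:M.
Proof. by rewrite /dot {1}[u^T *m v]mx11_scalar. Qed.

Lemma dotC u v : dot u v = dot v u.
Proof. by rewrite /dot -[u^T *m v]trmxK trmx_mul trmxK mxE. Qed.

Lemma dotDr u v x : dot u (v + x) = dot u v + dot u x.
Proof. by rewrite /dot mulmxDr mxE. Qed.

Lemma dotZr u v (c : R) : dot u (c *: v) = c * dot u v.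
Proof. by rewrite /dot -scalemxAr mxE. Qed.

Lemma dotNr u v : dot u (- v) = - dot u v.
Proof. by rewrite /dot mulmxN mxE. Qed.

Lemma dotBr u v x : dot u (v - x) = dot u v - dot u x.
Proof. by rewrite dotDr dotNr. Qed.

Lemma dotDl u v x : dot (v + x) u = dot v u + dot x u.
Proof. by rewrite dotC dotDr !(dotC u). Qed.

Lemma dotZl u v (c : R) : dot (c *: v) u = c * dot v u.
Proof. by rewrite dotC dotZr dotC. Qed.

Lemma dotNl u v : dot (- v) u = - dot v u.
Proof. by rewrite dotC dotNr dotC. Qed.

Lemma dotBl u v x : dot (v - x) u = dot v u - dot x u.
Proof. by rewrite dotDl dotNl. Qed.

Lemma dot0r u : dot u 0 = 0.
Proof. by rewrite /dot mulmx0 mxE. Qed.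

Lemma dot0l u : dot 0 u = 0.
Proof. by rewrite dotC dot0r. Qed.

Lemma dotE u v : dot u v = \sum_i u i 0 * v i 0.
Proof. by rewrite /dot mxE; apply: eq_bigr => i _; rewrite mxE. Qed.

Lemma dot_ge0 u : 0 <= dot u u.
Proof. by rewrite dotE sumr_ge0 // => i _; rewrite -expr2 sqr_ge0. Qed.

Lemma dot_eq0 u : (dot u u == 0) = (u == 0).
Proof.
apply/idP/idP; last by move/eqP->; rewrite dot0r.
rewrite dotE psumr_eq0 => [/allP H|i _]; last by rewrite -expr2 sqr_ge0.
apply/eqP/matrixP => i j; rewrite (ord1 j) mxE.
by have /eqP := H i (mem_index_enum _); rewrite -expr2 => /eqP; rewrite sqrf_eq0 => /eqP.
Qed.

Lemma dot_gt0 u : u != 0 -> 0 < dot u u.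
Proof. by move=> h; rewrite lt_def dot_ge0 dot_eq0 h. Qed.

Lemma dot_trmx M u v : dot (M *m u) v = dot u (M^T *m v).
Proof. by rewrite /dot trmx_mul mulmxA. Qed.

Definition orthm M := M^T *m M = 1%:M.

Lemma orthmC M : orthm M -> M *m M^T = 1%:M.
Proof. by move/mulmx1C. Qed.

Lemma dot_orth M u v : orthm M -> dot (M *m u) (M *m v) = dot u v.
Proof. by move=> h; rewrite dot_trmx mulmxA h mul1mx. Qed.

Lemma orthm_mul M1 M2 : orthm M1 -> orthm M2 -> orthm (M1 *m M2).
Proof.
by move=> h1 h2; rewrite /orthm trmx_mul mulmxA -(mulmxA M2^T) h1 mulmx1 h2.
Qed.

Lemma orthm_tr M : orthm M -> orthm M^T.
Proof. by move=> h; rewrite /orthm trmxK orthmC. Qed.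

Lemma orthm1 : orthm 1%:M.
Proof. by rewrite /orthm trmx1 mulmx1. Qed.

Lemma orthm_inv M : orthm M -> invmx M = M^T.
Proof.
move=> h; have hu : M \in unitmx.
  by case: (mulmx1_unit h).
by rewrite -[invmx M]mul1mx -h -mulmxA mulmxV // mulmx1.
Qed.

Lemma reflE a x : refl a *m x = x - (2 * dot a x / dot a a) *: a.
Proof.
rewrite /refl mulmxBl mul1mx -scalemxAl -mulmxA trmx_cV_mul.
by rewrite mul_mx_scalar scalerA mulrAC.
Qed.

Lemma refl_tr a : (refl a)^T = refl a.
Proof. by rewrite /refl linearB /= trmx1 linearZ /= trmx_mul trmxK. Qed.

Lemma refl_a a : a != 0 -> refl a *m a = - a.
Proof.
move=> h; have hd : dot a a != 0 by rewrite dot_eq0.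
rewrite reflE; have -> : 2 * dot a a / dot a a = 2 by field.
by rewrite scaler_nat mulr2n opprD addNKr.
Qed.

Lemma refl_orth a x : dot a x = 0 -> refl a *m x = x.
Proof. by move=> h; rewrite reflE h mulr0 mul0r scale0r subr0. Qed.

Lemma aaT2 a b : a *m a^T *m (b *m b^T) = dot a b *: (a *m b^T).
Proof.
by rewrite mulmxA -(mulmxA a) trmx_cV_mul mul_mx_scalar -scalemxAl.
Qed.

Lemma refl_invol a : a != 0 -> refl a *m refl a = 1%:M.
Proof.
move=> h; rewrite /refl mulmxBl mul1mx mulmxBr mulmx1 -!scalemxAl -!scalemxAr.
rewrite aaT2 !scalerA.
have hd : dot a a != 0 by rewrite dot_eq0.
have -> : 2 / dot a a * (2 / dot a a) * dot a a = 2 / dot a a + 2 / dot a a by field.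
by rewrite scalerDl opprB addrK subrK.
Qed.

Lemma refl_orthm a : a != 0 -> orthm (refl a).
Proof. by move=> h; rewrite /orthm refl_tr refl_invol. Qed.

Lemma reflN a : refl (- a) = refl a.
Proof. by rewrite /refl dotNl dotNr opprK linearN /= mulmxN mulNmx opprK. Qed.

Lemma refl_comm a b : dot a b = 0 -> refl a *m refl b = refl b *m refl a.
Proof.
move=> h; rewrite /refl !mulmxBl !mul1mx !mulmxBr !mulmx1 -!scalemxAl -!scalemxAr.
rewrite !aaT2 h dotC h !scale0r !scaler0.
by rewrite ?subr0 -!addrA [- _ + _]addrC.
Qed.

Lemma refl_conj M a : orthm M -> M *m refl a *m M^T = refl (M *m a).
Proof.
move=> h; rewrite /refl mulmxBr mulmx1 mulmxBl orthmC //.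
by rewrite -scalemxAr -scalemxAl dot_orth // trmx_mul !mulmxA.
Qed.

Lemma dot_refl a x y : a != 0 -> dot (refl a *m x) (refl a *m y) = dot x y.
Proof. by move=> h; rewrite dot_orth //; apply: refl_orthm. Qed.

End Lin.

Section RS.
Variables (R : realFieldType) (n : nat) (Phi : rootSystem R n) (g : 'cV[R]_n).
Hypothesis hg : forall a, a \in rs_roots Phi -> dot g a != 0.
Local Notation roots := (rs_roots Phi).
Local Notation pos := (pos Phi g).
Local Notation neg := (neg Phi g).
Local Notation simple := (simple Phi g).
Local Notation inW := (inW Phi).
Implicit Types (a b c x y : 'cV[R]_n) (w u v : 'M[R]_n).

Lemma root_nz a : a \in roots -> a != 0.
Proof. by move=> h; apply: contraNneq (rs_nz Phi) => <-. Qed.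

Lemma root_refl a b : a \in roots -> b \in roots -> refl a *m b \in roots.
Proof. exact: rs_refl. Qed.

Lemma root_opp a : a \in roots -> - a \in roots.
Proof. by move=> h; rewrite -refl_a ?root_nz // root_refl. Qed.

Lemma pos_root a : pos a -> a \in roots.
Proof. by case/andP. Qed.

Lemma neg_root a : neg a -> a \in roots.
Proof. by case/andP => /root_opp; rewrite opprK. Qed.

Lemma negE a : neg a = pos (- a).
Proof. by []. Qed.

Lemma pos_gt0 a : pos a -> 0 < dot g a.
Proof. by case/andP. Qed.

Lemma neg_lt0 a : neg a -> dot g a < 0.
Proof. by case/andP => _; rewrite dotNr oppr_gt0. Qed.

Lemma pos_or_neg a : a \in roots -> pos a \/ neg a.
Proof.
move=> h; have := hg h; rewrite neq_lt => /orP [lt|gt].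
  by right; rewrite /Defs.neg /Defs.pos root_opp // dotNr oppr_gt0.
by left; rewrite /Defs.pos h.
Qed.

Lemma pos_neg_F a : pos a -> neg a -> False.
Proof. by move=> /pos_gt0 h1 /neg_lt0 h2; have := lt_trans h2 h1; rewrite ltxx. Qed.

Lemma notpos_neg a : a \in roots -> ~~ pos a -> neg a.
Proof. by move=> h /negP hn; case: (pos_or_neg h). Qed.

Lemma notneg_pos a : a \in roots -> ~~ neg a -> pos a.
Proof. by move=> h /negP hn; case: (pos_or_neg h). Qed.

Lemma pos_nz a : pos a -> a != 0.
Proof. by move/pos_root/root_nz. Qed.

Lemma inW_refl a : a \in roots -> inW (refl a).
Proof. by move=> h; rewrite -[refl a]mulmx1; apply: inWs => //; apply: inW1. Qed.

Lemma inW_mul (x y : 'M[R]_n) : inW x -> inW y -> inW (x *m y).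
Proof.
elim=> [|a w0 ha hw0 IH] hy; first by rewrite mul1mx.
by rewrite -mulmxA; apply: inWs => //; apply: IH.
Qed.

Lemma inW_orthm w : inW w -> orthm w.
Proof.
elim=> [|a w0 ha hw0 IH]; first exact: orthm1.
by apply: orthm_mul => //; apply: refl_orthm; apply: root_nz.
Qed.

Lemma inW_tr w : inW w -> inW w^T.
Proof.
elim=> [|a w0 ha hw0 IH]; first by rewrite trmx1; apply: inW1.
by rewrite trmx_mul refl_tr; apply: inW_mul => //; apply: inW_refl.
Qed.

Lemma inW_root w a : inW w -> a \in roots -> w *m a \in roots.
Proof.
move=> hw; elim: hw a => [|b w0 hb hw0 IH] a ha; first by rewrite mul1mx.
by rewrite -mulmxA; apply: root_refl => //; apply: IH.
Qed.

Lemma inW_inv w : inW w -> invmx w = w^T.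
Proof. by move/inW_orthm/orthm_inv. Qed.

Definition word (s : seq 'cV[R]_n) : 'M[R]_n := foldr (fun a m => refl a *m m) 1%:M s.
Definition simple_seq (s : seq 'cV[R]_n) := forall a, a \in s -> simple a.

Lemma word_cat s t : word (s ++ t) = word s *m word t.
Proof. by elim: s => [|a s IH] /=; rewrite ?mul1mx // IH mulmxA. Qed.

Lemma word_rcons s a : word (rcons s a) = word s *m refl a.
Proof. by rewrite -cats1 word_cat /= mulmx1. Qed.

Lemma word_tr s : (word s)^T = word (rev s).
Proof.
elim: s => [|a s IH] /=; first by rewrite trmx1.
by rewrite trmx_mul IH refl_tr rev_cons word_rcons.
Qed.

Lemma simple_pos a : simple a -> pos a.
Proof. by case. Qed.

Lemma simple_root a : simple a -> a \in roots.
Proof. by move/simple_pos/pos_root. Qed.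

Lemma simple_seq_cons a s : simple_seq (a :: s) <-> simple a /\ simple_seq s.
Proof.
split=> [h|[ha hs] b]; last by rewrite inE => /orP [/eqP->|/hs].
by split=> [|b hb]; apply: h; rewrite inE ?eqxx ?hb ?orbT.
Qed.

Lemma simple_seq_cat s t : simple_seq (s ++ t) <-> simple_seq s /\ simple_seq t.
Proof.
split=> [h|[hs ht] b]; last by rewrite mem_cat => /orP [/hs|/ht].
by split=> b hb; apply: h; rewrite mem_cat hb ?orbT.
Qed.

Lemma simple_seq_rev s : simple_seq s -> simple_seq (rev s).
Proof. by move=> h b; rewrite mem_rev; apply: h. Qed.

Lemma inW_word s : simple_seq s -> inW (word s).
Proof.
elim: s => [|a s IH] /=; first by move=> _; apply: inW1.
by case/simple_seq_cons => ha hs; apply: inWs; [apply: simple_root|apply: IH].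
Qed.

End RS.

Lemma count_lt (T : eqType) (p q : pred T) (s : seq T) x :
  (forall y, p y -> q y) -> x \in s -> q x -> ~~ p x -> (count p s < count q s)%N.
Proof.
move=> hpq; elim: s => [|y s IH] //=; rewrite inE => /orP [/eqP <-|hx] hq hp.
  rewrite (negbTE hp) hq add0n add1n ltnS.
  by apply: sub_count => z; apply: hpq.
have h := IH hx hq hp; case hpy: (p y).
  by rewrite (hpq y hpy) ltn_add2l.
by rewrite add0n; apply: leq_trans h (leq_addl _ _).
Qed.

Section Simple.
Variables (R : realFieldType) (n : nat) (Phi : rootSystem R n) (g : 'cV[R]_n).
Hypothesis hg : forall a, a \in rs_roots Phi -> dot g a != 0.
Local Notation roots := (rs_roots Phi).
Local Notation pos := (pos Phi g).
Local Notation neg := (neg Phi g).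
Local Notation simple := (simple Phi g).
Local Notation inW := (inW Phi).
Local Notation simple_seq := (simple_seq Phi g).
Local Notation word := (@word R n).
Implicit Types (a b c x y : 'cV[R]_n) (w u v : 'M[R]_n).

Lemma height_ind (P : 'cV[R]_n -> Prop) :
  (forall a, pos a -> (forall b, pos b -> dot g b < dot g a -> P b) -> P a) ->
  forall a, pos a -> P a.
Proof.
move=> H.
suff K : forall k a, pos a ->
    (count (fun b => pos b && (dot g b < dot g a)%R) roots < k)%N -> P a.
  by move=> a ha; apply: (K _ a ha (ltnSn _)).
elim=> [//|k IH] a ha hk; apply: H => // b hb hlt; apply: IH => //.
rewrite ltnS in hk; apply: leq_trans hk; apply: (count_lt (x := b)).
- by move=> y /andP [hy1 hy2]; rewrite hy1 /=; apply: lt_trans hy2 hlt.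
- exact: (pos_root hb).
- by rewrite hb hlt.
- by rewrite ltxx andbF.
Qed.

Lemma cauchy_schwarz a b : a != 0 ->
  dot a a * (dot a a * dot b b - dot a b ^+ 2) =
  dot (dot a a *: b - dot a b *: a) (dot a a *: b - dot a b *: a).
Proof.
move=> _; rewrite !dotBl !dotBr !dotZl !dotZr (dotC b a); ring.
Qed.

Lemma cs_le a b : dot a b ^+ 2 <= dot a a * dot b b.
Proof.
have [->|ha] := eqVneq a 0; first by rewrite !dot0l expr0n /= mul0r.
have := cauchy_schwarz b ha; have hp := dot_gt0 ha.
have := dot_ge0 (dot a a *: b - dot a b *: a) => h1 h2.
rewrite -h2 pmulr_rge0 // in h1; by rewrite -subr_ge0.
Qed.

Lemma cs_eq a b : a != 0 -> dot a b ^+ 2 = dot a a * dot b b ->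
  b = (dot a b / dot a a) *: a.
Proof.
move=> ha h; have := cauchy_schwarz b ha; rewrite h subrr mulr0 => /esym /eqP.
rewrite dot_eq0 subr_eq0 => /eqP h2.
have hp := dot_gt0 ha.
apply: (@scalerI _ _ (dot a a)); first by rewrite gt_eqF.
by rewrite h2 scalerA mulrC divfK // gt_eqF.
Qed.

Lemma simple_ne_sum a b c : simple a -> pos b -> pos c -> a = b + c -> False.
Proof. by move=> [_ h] hb hc e; apply: h; exists b, c. Qed.

Lemma obtuse a b : simple a -> simple b -> a != b -> dot a b <= 0.
Proof.
move=> sa sb hab; rewrite leNgt; apply/negP => hpos.
have pa := simple_pos sa; have pb := simple_pos sb.
have ra := pos_root pa; have rb := pos_root pb.
have na := pos_nz pa; have nb := pos_nz pb.
have da := dot_gt0 na; have db := dot_gt0 nb.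
have strict : dot a b ^+ 2 < dot a a * dot b b.
  rewrite lt_def cs_le andbT; apply/negP => /eqP h.
  have e := cs_eq na (esym h).
  have := @rs_reduced _ _ Phi a (dot a b / dot a a) ra; rewrite -e => /(_ rb) [e1|e1].
    by move: hab; rewrite e e1 scale1r eqxx.
  have := pos_gt0 pb; rewrite e e1 scaleN1r dotNr oppr_gt0.
  by rewrite ltNge le_eqVlt (pos_gt0 pa) orbT.
have [z1 hz1] := rs_cryst ra rb.
have [z2 hz2] := rs_cryst rb ra.
have z1p : (0 < z1)%R.
  by rewrite -(ltr_int R) -hz1 mulr_gt0 ?invr_gt0 ?mulr_gt0.
have z2p : (0 < z2)%R.
  by rewrite -(ltr_int R) -hz2 dotC mulr_gt0 ?invr_gt0 ?mulr_gt0.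
have z12 : (z1 * z2 < 4)%R.
  rewrite -(ltr_int R) intrM -hz1 -hz2 (dotC b a).
  have -> : 2 * dot a b / dot b b * (2 * dot a b / dot a a) =
            4 * (dot a b ^+ 2 / (dot a a * dot b b)).
    by field; rewrite !gt_eqF.
  have h4 : (4%:~R : R) = 4 by [].
  rewrite h4 -{2}[4]mulr1 ltr_pM2l // ltr_pdivrMr ?mul1r //.
  by rewrite mulr_gt0.
have root_ab : a - b \in roots.
  have : (z1 = 1 \/ z2 = 1)%R by lia.
  case=> e.
    have := root_refl rb ra; rewrite reflE (dotC b a) hz1 e scale1r //.
  have := root_refl ra rb; rewrite reflE (dotC a b) hz2 e scale1r.
  by move/root_opp; rewrite opprB.
case: (pos_or_neg hg root_ab) => h.
  by apply: (simple_ne_sum sa h pb); rewrite subrK.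
by apply: (simple_ne_sum sb h pa); rewrite opprB subrK.
Qed.

Lemma pos_sum a : pos a -> exists s, simple_seq s /\ a = \sum_(x <- s) x.
Proof.
move: a; apply: (height_ind (P := fun a => exists s, simple_seq s /\ a = \sum_(x <- s) x)).
move=> a ha IH.
case: (classic (simple a)) => sa.
  exists [:: a]; split; last by rewrite big_seq1.
  by move=> b; rewrite inE => /eqP->.
have : exists b c, pos b /\ pos c /\ a = b + c.
  by apply: NNPP => hn; apply: sa; split.
move=> [b [c [hb [hc e]]]].
have gb := pos_gt0 hb; have gc := pos_gt0 hc.
have [sb [hsb eb]] : exists s, simple_seq s /\ b = \sum_(x <- s) x.
  by apply: IH => //; rewrite e dotDr ltrDl.
have [sc [hsc ec]] : exists s, simple_seq s /\ c = \sum_(x <- s) x.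
  by apply: IH => //; rewrite e dotDr ltrDr.
exists (sb ++ sc); split; first by apply/simple_seq_cat.
by rewrite big_cat /= e eb ec.
Qed.

Lemma dot_suml (I : Type) (r : seq I) (P : pred I) (F : I -> 'cV[R]_n) (v : 'cV[R]_n) :
  dot (\sum_(i <- r | P i) F i) v = \sum_(i <- r | P i) dot (F i) v.
Proof. by apply: (big_morph (fun x => dot x v)) => [x y|]; rewrite ?dotDl ?dot0l. Qed.

Lemma dot_sumr (I : Type) (r : seq I) (P : pred I) (F : I -> 'cV[R]_n) (v : 'cV[R]_n) :
  dot v (\sum_(i <- r | P i) F i) = \sum_(i <- r | P i) dot v (F i).
Proof. by rewrite dotC dot_suml; apply: eq_bigr => i _; rewrite dotC. Qed.

Lemma sum_const_vec (s : seq 'cV[R]_n) a :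
  (forall x, x \in s -> x = a) -> \sum_(x <- s) x = (size s)%:R *: a.
Proof.
elim: s => [|y s IH] h; first by rewrite big_nil scale0r.
rewrite big_cons IH => [|x hx]; last by apply: h; rewrite inE hx orbT.
by rewrite (h y) ?mem_head // /= [in RHS]mulrS scalerDl scale1r.
Qed.

Lemma key5 al be : simple al -> pos be -> neg (refl al *m be) -> be = al.
Proof.
move=> sal pbe nr.
have pal := simple_pos sal; have nal := pos_nz pal.
set c := 2 * dot al be / dot al al.
have [sb [hsb eb]] := pos_sum pbe.
have [sg [hsg eg]] := pos_sum nr.
set s := sb ++ sg.
have hs : simple_seq s by apply/simple_seq_cat.
have esum : \sum_(x <- s) x = c *: al.
  by rewrite big_cat /= -eb -eg reflE opprB addrC subrK.
set L := \sum_(x <- s | x != al) x.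
set m : R := (count (pred1 al) s)%:R.
have eL : L = (c - m) *: al.
  have := esum; rewrite (bigID (fun x => x == al)) /= -/L.
  rewrite (big_morph (fun x => x) (id1 := 0) (op1 := +%R)) //.
  have -> : \sum_(i <- s | i == al) i = m *: al.
    rewrite (eq_bigr (fun _ => al)) => [|i /eqP//].
    rewrite big_const_seq; rewrite /m.
    elim: (count _ s) => [|k IHk] /=; first by rewrite scale0r.
    by rewrite IHk [in RHS]mulrS scalerDl scale1r.
  by move=> e; rewrite scalerBl -e addrAC subrr add0r.
have dLal : dot L al <= 0.
  rewrite dot_suml big_seq_cond; apply: sumr_le0 => x /andP [hx hne].
  by apply: obtuse => //; apply: hs.
have gL : 0 <= dot g L.
  rewrite dot_sumr big_seq_cond; apply: sumr_ge0 => x /andP [hx _].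
  by apply/ltW/pos_gt0/simple_pos/hs.
have L0 : L = 0.
  have [cm|cm] := leP 0 (c - m).
    apply/eqP; rewrite -dot_eq0 eq_le dot_ge0 andbT.
    by rewrite {1}eL dotZl dotC; apply: mulr_ge0_le0.
  exfalso; move: gL; rewrite eL dotZr leNgt => /negP; apply.
  by rewrite pmulr_llt0 ?(pos_gt0 pal).
have allal : forall x, x \in sb -> x = al.
  move=> x hx; apply/eqP; apply/negPn/negP => hne.
  have : dot g L == 0 by rewrite L0 dot0r.
  rewrite dot_sumr big_seq_cond psumr_eq0 => [|i /andP [hi _]].
    move/allP => /(_ x); rewrite mem_cat hx /= hne /= => /(_ isT).
    by rewrite (gt_eqF (pos_gt0 (simple_pos (hsb x hx)))).
  by apply/ltW/pos_gt0/simple_pos/hs.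
have ebe : be = (size sb)%:R *: al by rewrite eb; apply: sum_const_vec.
have := @rs_reduced _ _ Phi al (size sb)%:R (simple_root sal).
rewrite -ebe => /(_ (pos_root pbe)) [e1|e1]; first by rewrite ebe e1 scale1r.
by have := ler0n R (size sb); rewrite e1 lerNr oppr0 ler10.
Qed.

Lemma key5_pos al be : simple al -> pos be -> be != al -> pos (refl al *m be).
Proof.
move=> sal pbe hne; apply: (notneg_pos hg).
  by apply: root_refl; [apply: (simple_root sal)|apply: (pos_root pbe)].
by apply/negP => /(key5 sal pbe) e; rewrite e eqxx in hne.
Qed.

Lemma refl_word_pos a : pos a -> exists s, simple_seq s /\ refl a = word s.
Proof.
move: a; apply: (height_ind (P := fun a => exists s, simple_seq s /\ refl a = word s)).
move=> a ha IH.
case: (classic (simple a)) => sa.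
  exists [:: a]; split; last by rewrite /= mulmx1.
  by move=> b; rewrite inE => /eqP->.
have [s [hs es]] := pos_sum ha.
have : exists2 al, al \in s & 0 < dot a al.
  apply: NNPP => hn.
  have : 0 < dot a a by exact: dot_gt0 (pos_nz ha).
  rewrite {2}es dot_sumr big_seq_cond ltNge => /negP; apply.
  apply: sumr_le0 => i /andP [hi _]; rewrite leNgt; apply/negP => hlt.
  by apply: hn; exists i.
move=> [al hal hdot].
have sal := hs _ hal.
have hne : a != al by apply/negP => /eqP e; apply: sa; rewrite e.
have pa' := key5_pos sal ha hne.
have [s' [hs' es']] : exists s, simple_seq s /\ refl (refl al *m a) = word s.
  apply: IH => //; rewrite reflE dotBr dotZr ltrBlDr ltrDl.
  apply: mulr_gt0; last exact: pos_gt0 (simple_pos sal).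
  have hnz := dot_gt0 (pos_nz (simple_pos sal)).
  by rewrite mulr_gt0 ?invr_gt0 // mulr_gt0 // dotC.
exists (al :: s' ++ [:: al]); split.
  apply/simple_seq_cons; split => //; apply/simple_seq_cat; split => //.
  by move=> b; rewrite inE => /eqP->.
have hal0 := pos_nz (simple_pos sal).
rewrite /= word_cat -es' /= mulmx1 -refl_conj; last exact: refl_orthm hal0.
by rewrite refl_tr !mulmxA refl_invol // mul1mx -mulmxA refl_invol // mulmx1.
Qed.

Lemma refl_word a : a \in roots -> exists s, simple_seq s /\ refl a = word s.
Proof.
move=> ha; case: (pos_or_neg hg ha) => h; first exact: refl_word_pos.
by rewrite -reflN; apply: refl_word_pos.
Qed.

Lemma inW_word_ex w : inW w -> exists s, simple_seq s /\ w = word s.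
Proof.
elim=> [|a w0 ha hw0 [s0 [hs0 e0]]]; first by exists [::].
have [s1 [hs1 e1]] := refl_word ha.
exists (s1 ++ s0); split; first by apply/simple_seq_cat.
by rewrite word_cat e0 e1.
Qed.

End Simple.

Lemma ex_min (P : nat -> Prop) : (exists k, P k) -> exists k, P k /\ forall j, P j -> (k <= j)%N.
Proof.
move=> [k0 hk0].
suff H : forall N k, (k <= N)%N -> P k -> exists k, P k /\ forall j, P j -> (k <= j)%N.
  by apply: (H k0 k0).
elim=> [|N IH] k hkN hk.
  by exists k; split => // j _; move: hkN; rewrite leqn0 => /eqP->.
case: (classic (exists j, P j /\ (j < k)%N)) => [[j [hj hjk]]|hn].
  by apply: (IH j) => //; rewrite -ltnS; apply: leq_trans hjk hkN.
exists k; split => // j hj; rewrite leqNgt; apply/negP => hjk; apply: hn.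
by exists j.
Qed.

Section Len.
Variables (R : realFieldType) (n : nat) (Phi : rootSystem R n) (g : 'cV[R]_n).
Hypothesis hg : forall a, a \in rs_roots Phi -> dot g a != 0.
Local Notation roots := (rs_roots Phi).
Local Notation pos := (pos Phi g).
Local Notation neg := (neg Phi g).
Local Notation simple := (simple Phi g).
Local Notation inW := (inW Phi).
Local Notation simple_seq := (simple_seq Phi g).
Local Notation word := (@word R n).
Local Notation len := (len Phi g).
Implicit Types (a b c x y : 'cV[R]_n) (w u v : 'M[R]_n).

Lemma wordlenP w k : wordlen Phi g w k <-> exists s, simple_seq s /\ size s = k /\ w = word s.
Proof.
split; first by move=> [s [hs [hsim e]]]; exists s.
by move=> [s [hsim [hs e]]]; exists s.
Qed.

Lemma len_spec w : inW w ->
  wordlen Phi g w (len w) /\ forall j, wordlen Phi g w j -> (len w <= j)%N.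
Proof.
move=> hw; rewrite /Defs.len.
apply: (epsilon_spec (inhabits 0%N) (fun k => wordlen Phi g w k /\ forall j, wordlen Phi g w j -> (k <= j)%N)).
apply: ex_min.
have [s [hs e]] := inW_word_ex hg hw.
by exists (size s); apply/wordlenP; exists s.
Qed.

Lemma len_word s : simple_seq s -> (len (word s) <= size s)%N.
Proof.
move=> hs; have [_ h] := len_spec (inW_word hs); apply: h.
by apply/wordlenP; exists s.
Qed.

Lemma len_reduced w : inW w -> exists s, [/\ simple_seq s, size s = len w & w = word s].
Proof.
move=> hw; have [/wordlenP [s [hs [hsz e]]] _] := len_spec hw.
by exists s.
Qed.

Lemma exchange s : simple_seq s -> forall be, pos be -> neg (word (rev s) *m be) ->
  exists s', [/\ simple_seq s', (size s' < size s)%N & refl be *m word s = word s'].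
Proof.
elim: s => [|a s IH] hs be hbe.
  by rewrite /= mul1mx => hn; case: (pos_neg_F hbe hn).
case/simple_seq_cons: hs => sa hs.
rewrite rev_cons word_rcons -mulmxA => hn.
have ha0 := pos_nz (simple_pos sa).
have rbe' : refl a *m be \in roots.
  by apply: root_refl; [exact: simple_root sa|exact: pos_root hbe].
case: (pos_or_neg hg rbe') => hb'.
  have [s' [hs' hsz e']] := IH hs _ hb' hn.
  exists (a :: s'); split => //; first by apply/simple_seq_cons.
  rewrite /= -e'.
  have -> : refl be = refl a *m refl (refl a *m be) *m refl a.
    rewrite -refl_conj; last exact: refl_orthm ha0.
    rewrite refl_tr !mulmxA refl_invol // mul1mx.
    by rewrite -mulmxA refl_invol // mulmx1.
  by rewrite !mulmxA -(mulmxA _ (refl a) (refl a)) refl_invol // mulmx1.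
have e := key5 hg sa hbe hb'.
by exists s; split => //; rewrite e /= mulmxA refl_invol // mul1mx.
Qed.

Lemma word_tr_inv s : simple_seq s -> invmx (word s) = word (rev s).
Proof. by move=> hs; rewrite (inW_inv (inW_word hs)) word_tr. Qed.

Lemma len_refl_lt w be : inW w -> pos be -> neg (w^T *m be) ->
  (len (refl be *m w) < len w)%N.
Proof.
move=> hw hbe hn; have [s [hs hsz e]] := len_reduced hw.
rewrite e word_tr in hn.
have [s' [hs' hsz' e']] := exchange hs hbe hn.
by rewrite -hsz {1}e e'; exact: leq_ltn_trans (len_word hs') hsz'.
Qed.

Lemma len_refl_gt w be : inW w -> pos be -> pos (w^T *m be) ->
  (len w < len (refl be *m w))%N.
Proof.
move=> hw hbe hp.
have hw' : inW (refl be *m w) by apply: inWs => //; exact: pos_root hbe.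
have := len_refl_lt hw' hbe.
rewrite mulmxA refl_invol ?(pos_nz hbe) // mul1mx; apply.
by rewrite trmx_mul refl_tr -mulmxA refl_a ?(pos_nz hbe) // mulmxN /Defs.neg opprK.
Qed.

Lemma len_simple_le w a : inW w -> simple a -> (len (refl a *m w) <= (len w).+1)%N.
Proof.
move=> hw sa; have [s [hs hsz e]] := len_reduced hw.
have -> : refl a *m w = word (a :: s) by rewrite e.
rewrite -hsz; apply: len_word; by apply/simple_seq_cons.
Qed.

Lemma len_simple_ge w a : inW w -> simple a -> (len w <= (len (refl a *m w)).+1)%N.
Proof.
move=> hw sa; have ha := simple_root sa.
have := len_simple_le (inWs ha hw) sa.
by rewrite mulmxA refl_invol ?(root_nz ha) // mul1mx.
Qed.

Lemma first_simple w : inW w -> (0 < len w)%N -> exists2 a, simple a & neg (w^T *m a).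
Proof.
move=> hw hl; have [s [hs hsz e]] := len_reduced hw.
case: s hs hsz e => [|a s] hs hsz e; first by rewrite -hsz in hl.
case/simple_seq_cons: (hs) => sa hs'.
exists a => //; apply: (notpos_neg hg).
  by apply: inW_root; [exact: inW_tr hw|exact: simple_root sa].
apply/negP => hp; have := len_refl_gt hw (simple_pos sa) hp.
have ht : refl a *m w = word s.
  by rewrite e /= mulmxA refl_invol ?(pos_nz (simple_pos sa)) // mul1mx.
rewrite ht -hsz /= => h; have := len_word hs'; lia.
Qed.

End Len.

Section Sets.
Variables (R : realFieldType) (n : nat) (Phi : rootSystem R n) (g : 'cV[R]_n).
Hypothesis hg : forall a, a \in rs_roots Phi -> dot g a != 0.
Local Notation roots := (rs_roots Phi).
Local Notation pos := (pos Phi g).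
Local Notation neg := (neg Phi g).
Local Notation simple := (simple Phi g).
Local Notation inW := (inW Phi).
Local Notation len := (len Phi g).
Local Notation rt := (rsroot Phi).
Implicit Types (x y : 'cV[R]_n) (w u v : 'M[R]_n) (T : {set rt}) (b c : rt).

Definition Pm T : 'M[R]_n := \big[mulmx/1%:M]_(b in T) refl (val b).
Definition orthS T := forall b c : rt, b \in T -> c \in T -> b != c -> dot (val b) (val c) = 0.

Lemma wThetaE w T : wTheta Phi w T = Pm T *m w.
Proof. by []. Qed.

Lemma vroot (b : rt) : val b \in roots.
Proof. exact: valP. Qed.

Lemma vnz (b : rt) : val b != 0.
Proof. exact: root_nz (vroot b). Qed.

Lemma Pm0 : Pm set0 = 1%:M.
Proof. by rewrite /Pm big_set0. Qed.

Lemma prod_ins (r : seq rt) (A : {set rt}) (b : rt) (F : rt -> 'M[R]_n) :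
  uniq r -> b \in r -> b \notin A -> (forall x : rt, x \in A -> F x *m F b = F b *m F x) ->
  \big[mulmx/1%:M]_(i <- r) (if i \in b |: A then F i else 1%:M) =
  F b *m \big[mulmx/1%:M]_(i <- r) (if i \in A then F i else 1%:M).
Proof.
move=> + + hbA hc; elim: r => [//|x r IH] /= /andP [hx hu]; rewrite inE.
case: (eqVneq b x) => [ebx _|hne /= hb].
  subst x.
  rewrite !big_cons in_setU1 eqxx (negbTE hbA) /= mul1mx; congr (_ *m _).
  apply: eq_big_seq => i hi; rewrite in_setU1.
  by case: (eqVneq i b) => [e|//]; move: hx; rewrite -e hi.
rewrite !big_cons IH // in_setU1 eq_sym (negbTE hne) /=.
case: ifP => hxA; last by rewrite !mul1mx.
by rewrite !mulmxA hc.
Qed.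

Lemma mkcond_mx (I : Type) (r : seq I) (P : pred I) (F : I -> 'M[R]_n) :
  \big[mulmx/1%:M]_(i <- r | P i) F i = \big[mulmx/1%:M]_(i <- r) (if P i then F i else 1%:M).
Proof.
elim: r => [|x r IH]; first by rewrite !big_nil.
by rewrite !big_cons IH; case: (P x); rewrite ?mul1mx.
Qed.

Lemma PmU1 T (b : rt) : b \notin T -> orthS (b |: T) -> Pm (b |: T) = refl (val b) *m Pm T.
Proof.
move=> hb ho; rewrite /Pm mkcond_mx [in RHS]mkcond_mx /=.
apply: prod_ins => //; first exact: index_enum_uniq.
  by rewrite mem_index_enum.
move=> x hx; apply: refl_comm; apply: ho; rewrite ?in_setU1 ?eqxx ?hx ?orbT //.
by apply: contraNneq hb => <-.
Qed.

Lemma set_ind (P : {set rt} -> Prop) : P set0 ->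
  (forall b T, b \notin T -> P T -> P (b |: T)) -> forall T, P T.
Proof.
move=> h0 hS T; have [k hT] : exists k, #|T| = k by exists #|T|.
elim: k T hT => [|k IH] T hT.
  by move/eqP: hT; rewrite cards_eq0 => /eqP ->.
have : T != set0 by rewrite -card_gt0 hT.
case/set0Pn => b hb; rewrite -(setD1K hb); apply: hS; first by rewrite setD11.
by apply: IH; rewrite (cardsD1 b T) hb in hT; case: hT.
Qed.

Lemma orthS_sub T1 T2 : T1 \subset T2 -> orthS T2 -> orthS T1.
Proof. by move=> /subsetP hs ho b c hb hc; apply: ho; apply: hs. Qed.

Lemma orthS_U1 T (b : rt) : orthS (b |: T) -> orthS T.
Proof. by apply: orthS_sub; apply: subsetUr. Qed.

Lemma Pm_orthm T : orthm (Pm T).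
Proof.
rewrite /Pm; apply: (big_ind (fun M => orthm M)); first exact: orthm1.
  by move=> x y; apply: orthm_mul.
by move=> i _; apply: refl_orthm (vnz i).
Qed.

Lemma Pm_inW T : inW (Pm T).
Proof.
rewrite /Pm; apply: (big_ind (fun M => inW M)); first exact: inW1.
  by move=> x y; apply: inW_mul.
by move=> i _; apply: inW_refl (vroot i).
Qed.

Lemma Pm_fix T x : orthS T -> (forall b, b \in T -> dot (val b) x = 0) -> Pm T *m x = x.
Proof.
move: T; apply: (set_ind (P := fun T => orthS T -> (forall b, b \in T -> dot (val b) x = 0) -> Pm T *m x = x)).
  by move=> _ _; rewrite Pm0 mul1mx.
move=> b T hb IH ho h.
have ho' := orthS_U1 ho.
rewrite PmU1 // -mulmxA IH //; last by move=> c hc; apply: h; rewrite in_setU1 hc orbT.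
by apply: refl_orth; apply: h; rewrite in_setU1 eqxx.
Qed.

Lemma Pm_comm T x : orthS T -> (forall b, b \in T -> dot (val b) x = 0) ->
  refl x *m Pm T = Pm T *m refl x.
Proof.
move: T; apply: (set_ind (P := fun T => orthS T -> (forall b, b \in T -> dot (val b) x = 0) -> refl x *m Pm T = Pm T *m refl x)).
  by move=> _ _; rewrite Pm0 mul1mx mulmx1.
move=> b T hb IH ho h.
have hbx : dot (val b) x = 0 by apply: h; rewrite in_setU1 eqxx.
have hxb : dot x (val b) = 0 by rewrite dotC.
rewrite PmU1 // mulmxA (refl_comm hxb) -!mulmxA.
have ho' := orthS_U1 ho.
by rewrite IH // => c hc; apply: h; rewrite in_setU1 hc orbT.
Qed.

Lemma Pm_neg T b : orthS T -> b \in T -> Pm T *m val b = - val b.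
Proof.
move=> ho hb; have ho2 : orthS (b |: T :\ b) by rewrite setD1K.
rewrite -(setD1K hb) PmU1 ?setD11 // -mulmxA Pm_fix ?refl_a ?vnz //.
  exact: orthS_U1 ho2.
by move=> c; rewrite in_setD1 => /andP [hcb hc]; apply: ho.
Qed.

Lemma Pm_sym T : orthS T -> (Pm T)^T = Pm T.
Proof.
move: T; apply: (set_ind (P := fun T => orthS T -> (Pm T)^T = Pm T)).
  by move=> _; rewrite Pm0 trmx1.
move=> b T hb IH ho; have ho' := orthS_U1 ho.
rewrite PmU1 // trmx_mul IH // refl_tr -Pm_comm //.
move=> c hc; apply: ho; [by rewrite in_setU1 hc orbT|by rewrite in_setU1 eqxx|].
by apply: contraNneq hb => <-.
Qed.

Lemma Pm_tr_fix T x : orthS T -> (forall b, b \in T -> dot (val b) x = 0) -> (Pm T)^T *m x = x.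
Proof. by move=> ho h; rewrite Pm_sym // Pm_fix. Qed.

Lemma Pm_invol T : orthS T -> Pm T *m Pm T = 1%:M.
Proof. by move=> ho; have := Pm_orthm T; rewrite /orthm Pm_sym. Qed.

Definition rf (al : 'cV[R]_n) (b : rt) : rt := insubd b (refl al *m val b).

Lemma rfE al b : al \in roots -> val (rf al b) = refl al *m val b.
Proof. by move=> ha; rewrite /rf val_insubd root_refl // vroot. Qed.

Lemma rf_inj al : al \in roots -> injective (rf al).
Proof.
move=> ha b c e; apply: val_inj; have := congr1 val e; rewrite !rfE // => e2.
have := congr1 (mulmx (refl al)) e2; rewrite !mulmxA refl_invol ?(root_nz ha) //.
by rewrite !mul1mx.
Qed.

Lemma orthS_rf al T : al \in roots -> orthS T -> orthS (rf al @: T).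
Proof.
move=> ha ho b' c' /imsetP [b hb ->] /imsetP [c hc ->] hne.
rewrite !rfE // dot_refl ?(root_nz ha) //; apply: ho => //.
by apply: contraNneq hne => ->.
Qed.

Lemma Pm_rf al T : al \in roots -> orthS T -> Pm (rf al @: T) = refl al *m Pm T *m refl al.
Proof.
move=> ha; move: T.
apply: (set_ind (P := fun T => orthS T -> Pm (rf al @: T) = refl al *m Pm T *m refl al)).
  by move=> _; rewrite imset0 Pm0 mulmx1 refl_invol // (root_nz ha).
move=> b T hb IH ho; have ho' := orthS_U1 ho.
rewrite imsetU1 PmU1; first last.
- by rewrite -imsetU1; apply: orthS_rf.
- by rewrite mem_imset //; apply: rf_inj.
rewrite IH // PmU1 // rfE // -refl_conj; last exact: refl_orthm (root_nz ha).
rewrite refl_tr.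
by rewrite !mulmxA -(mulmxA _ (refl al) (refl al)) refl_invol ?(root_nz ha) // mulmx1.
Qed.

End Sets.

Section Main.
Variables (R : realFieldType) (n : nat) (Phi : rootSystem R n) (g : 'cV[R]_n).
Hypothesis hg : forall a, a \in rs_roots Phi -> dot g a != 0.
Local Notation roots := (rs_roots Phi).
Local Notation pos := (pos Phi g).
Local Notation neg := (neg Phi g).
Local Notation simple := (simple Phi g).
Local Notation inW := (inW Phi).
Local Notation len := (len Phi g).
Local Notation rt := (rsroot Phi).
Local Notation Pm := (@Pm R n Phi).
Local Notation orthS := (@orthS R n Phi).
Implicit Types (x y : 'cV[R]_n) (w u v : 'M[R]_n) (T : {set rt}) (b c : rt).

Lemma poswE w x : inW w -> posw Phi g w x = pos x && neg (w^T *m x).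
Proof. by move=> hw; rewrite /posw (inW_inv hw). Qed.

Lemma chain_bound w T : inW w -> orthS T ->
  (forall b, b \in T -> pos (val b) /\ neg (w^T *m val b)) ->
  (len (Pm T *m w) + #|T| <= len w)%N.
Proof.
move=> hw; move: T.
apply: (set_ind (P := fun T => orthS T ->
  (forall b, b \in T -> pos (val b) /\ neg (w^T *m val b)) ->
  (len (Pm T *m w) + #|T| <= len w)%N)).
  by move=> _ _; rewrite Pm0 mul1mx cards0 addn0.
move=> b T hb IH ho h; have ho' := orthS_U1 ho.
have IH' := IH ho' (fun c hc => h c (setU1r _ hc)).
have [pb nb] := h b (setU11 b T).
have hy : inW (Pm T *m w) by apply: inW_mul => //; apply: Pm_inW.
have hlt : (len (refl (val b) *m (Pm T *m w)) < len (Pm T *m w))%N.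
  apply: len_refl_lt => //; rewrite trmx_mul -mulmxA Pm_tr_fix //.
  move=> c hc; apply: ho; [by rewrite in_setU1 hc orbT|by rewrite in_setU1 eqxx|].
  by apply: contraNneq hb => <-.
rewrite PmU1 // -mulmxA cardsU1 hb; lia.
Qed.

Lemma order_rev w T1 T2 : inW w -> T1 \subset T2 -> orthS T2 ->
  (forall b, b \in T2 -> posw Phi g w (val b)) ->
  bruhat_le Phi g (wTheta Phi w T2) (wTheta Phi w T1).
Proof.
move=> hw hsub ho hp.
suff K : forall k T, T \subset T2 -> (#|T2| - #|T|)%N = k ->
    bruhat_le Phi g (wTheta Phi w T2) (wTheta Phi w T).
  by apply: (K _ T1 hsub erefl).
elim=> [|k IH] T hT hk.
  have -> : T = T2.
    by apply/eqP; rewrite eqEcard hT /= -subn_eq0 hk.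
  exact: rt_refl.
have : T2 :\: T != set0.
  by rewrite setD_eq0; apply/negP => h; have := subset_leq_card h; rewrite -subn_eq0 hk.
case/set0Pn => b; rewrite in_setD => /andP [hbT hb2].
have hsub' : b |: T \subset T2 by rewrite subUset sub1set hb2 hT.
have hk' : (#|T2| - #|b |: T|)%N = k by rewrite cardsU1 hbT; move: hk; lia.
apply: rt_trans (IH _ hsub' hk') _; apply: rt_step.
have ho' : orthS (b |: T) := orthS_sub hsub' ho.
have hbT' : forall c, c \in T -> dot (val c) (val b) = 0.
  move=> c hc; apply: ho; [exact: (subsetP hT) | exact: hb2 |].
  by apply: contraNneq hbT => <-.
have := hp b hb2; rewrite poswE // => /andP [pb nb].
exists (val b); split => //; split.
  rewrite !wThetaE PmU1 // -!mulmxA mulmxA refl_invol ?vnz //.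
  by rewrite mul1mx.
rewrite !wThetaE PmU1 // -mulmxA; apply: len_refl_lt => //.
- by apply: inW_mul => //; apply: Pm_inW.
- by rewrite trmx_mul -mulmxA Pm_tr_fix //; exact: orthS_U1 ho'.
Qed.

Lemma Tw_orth w T : Tw Phi g w T -> orthS T.
Proof. by case=> _ []. Qed.

Lemma Tw_pos w T : inW w -> Tw Phi g w T ->
  forall b, b \in T -> pos (val b) /\ neg (w^T *m val b).
Proof. by move=> hw [h _] b hb; move: (h b hb); rewrite poswE // => /andP. Qed.

Lemma Tw_len w T : Tw Phi g w T -> (len (Pm T *m w) + #|T| = len w)%N.
Proof. by case=> _ []. Qed.

Lemma len_step w al : inW w -> simple al -> neg (w^T *m al) ->
  (len (refl al *m w)).+1 = len w.
Proof.
move=> hw sal hn.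
have h1 := len_refl_lt hg hw (simple_pos sal) hn.
have h2 := len_simple_ge hg hw sal.
by apply/eqP; rewrite eqn_leq h1 h2.
Qed.

Lemma rf_prop w al b : inW w -> simple al -> val b != al -> pos (val b) ->
  neg (w^T *m val b) ->
  pos (val (rf al b)) /\ neg ((refl al *m w)^T *m val (rf al b)).
Proof.
move=> hw sal hne pb nb; have ha := simple_root sal.
rewrite rfE //; split; first by apply: (key5_pos hg sal pb).

rewrite trmx_mul refl_tr -mulmxA (mulmxA (refl al)) refl_invol ?(root_nz ha) //.
by rewrite mul1mx.
Qed.

Lemma caseA w T1 T2 al : inW w -> simple al -> neg (w^T *m al) ->
  Tw Phi g w T1 -> Tw Phi g w T2 -> Pm T1 = Pm T2 ->
  (exists2 a, a \in T1 & val a = al) -> (forall b, b \in T2 -> val b != al) -> False.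
Proof.
move=> hw sal hn h1 h2 e [a ha ea] hn2.
have hal := simple_root sal; have nal := root_nz hal.
have hu : inW (Pm T1 *m w) by apply: inW_mul => //; apply: Pm_inW.
have gt : (len (Pm T1 *m w) < len (refl al *m (Pm T1 *m w)))%N.
  apply: len_refl_gt => //; first exact: simple_pos.
  have ho1 := Tw_orth h1.
  rewrite trmx_mul -mulmxA Pm_sym // -ea Pm_neg // mulmxN.
  by move: hn; rewrite /Defs.neg ea.
have hw' : inW (refl al *m w) by apply: inWs.
have e2 : refl al *m (Pm T1 *m w) = Pm (rf al @: T2) *m (refl al *m w).
  rewrite e Pm_rf //; last exact: Tw_orth h2.
  by rewrite !mulmxA -(mulmxA _ (refl al) (refl al)) refl_invol // mulmx1.
have cb := chain_bound hw' (orthS_rf hal (Tw_orth h2)).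
have hyp : forall b', b' \in rf al @: T2 ->
    pos (val b') /\ neg ((refl al *m w)^T *m val b').
  move=> b' /imsetP [b hb ->]; have [pb nb] := Tw_pos hw h2 hb.
  exact: rf_prop hw sal (hn2 b hb) pb nb.
have := cb hyp; rewrite card_imset; last exact: rf_inj hal.
rewrite -e2.
have l1 := Tw_len h1; have l2 := Tw_len h2; rewrite -e in l2.
have l3 := len_step hw sal hn.
move: gt l1 l2 l3.
move: (len (Pm T1 *m w)) (len (refl al *m (Pm T1 *m w))) (len (refl al *m w)) (len w) #|T1| #|T2| => A B C D t1 t2.
lia.
Qed.

Lemma remove_prop w T a : inW w -> simple (val a) -> neg (w^T *m val a) ->
  Tw Phi g w T -> a \in T ->
  Tw Phi g (refl (val a) *m w) (T :\ a) /\ Pm T = refl (val a) *m Pm (T :\ a).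
Proof.
move=> hw sa hn hT haT.
have ho := Tw_orth hT; have na := vnz a.
have ho' : orthS (a |: T :\ a) by rewrite setD1K.
have eP : Pm T = refl (val a) *m Pm (T :\ a).
  by rewrite -{1}(setD1K haT) PmU1 // setD11.
have hperp : forall c, c \in T :\ a -> dot (val c) (val a) = 0.
  by move=> c; rewrite in_setD1 => /andP [hca hc]; apply: ho.
have hw' : inW (refl (val a) *m w) by apply: inWs => //; apply: vroot.
split => //; split; [|split].
- move=> c hc; rewrite poswE //; have hc' : c \in T by move: hc; rewrite in_setD1 => /andP [].
  have [pc nc] := Tw_pos hw hT hc'; rewrite pc /=.
  rewrite trmx_mul refl_tr -mulmxA refl_orth //; by rewrite dotC hperp.
- exact: orthS_U1 ho'.
- rewrite wThetaE mulmxA -Pm_comm //; last exact: orthS_U1 ho'.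
  rewrite -eP.
  have l1 := Tw_len hT; have l3 := len_step hw sa hn.
  have l4 := cardsD1 a T; rewrite haT in l4.
  move: l1 l3 l4.
  move: (len (Pm T *m w)) (len (refl (val a) *m w)) (len w) #|T| #|T :\ a| => A B C t1 t2.
  lia.
Qed.

Lemma conj_prop w T al : inW w -> simple al -> neg (w^T *m al) ->
  Tw Phi g w T -> (forall b, b \in T -> val b != al) ->
  Tw Phi g (refl al *m w) (rf al @: T).
Proof.
move=> hw sal hn hT hne.
have hal := simple_root sal; have nal := root_nz hal.
have ho := Tw_orth hT.
have hw' : inW (refl al *m w) by apply: inWs.
have hyp : forall b', b' \in rf al @: T ->
    pos (val b') /\ neg ((refl al *m w)^T *m val b').
  move=> b' /imsetP [b hb ->]; have [pb nb] := Tw_pos hw hT hb.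
  exact: rf_prop hw sal (hne b hb) pb nb.
split; [|split].
- by move=> b hb; rewrite poswE //; have [-> ->] := hyp b hb.
- exact: orthS_rf hal ho.
rewrite wThetaE card_imset; last exact: rf_inj hal.
have e2 : Pm (rf al @: T) *m (refl al *m w) = refl al *m (Pm T *m w).
  rewrite Pm_rf //.
  by rewrite !mulmxA -(mulmxA _ (refl al) (refl al)) refl_invol // mulmx1.
have cb := chain_bound hw' (orthS_rf hal ho) hyp.
rewrite card_imset in cb; last exact: rf_inj hal.
have hu : inW (Pm T *m w) by apply: inW_mul => //; apply: Pm_inW.
have l5 := len_simple_ge hg hu sal.
rewrite e2 in cb *.
have l1 := Tw_len hT; have l3 := len_step hw sal hn.
move: l1 l3 l5 cb.
move: (len (Pm T *m w)) (len (refl al *m (Pm T *m w))) (len (refl al *m w)) (len w) #|T| => A B C D t.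
lia.
Qed.

Lemma Tw_len0 w T : Tw Phi g w T -> len w = 0%N -> T = set0.
Proof.
move=> h e; have := Tw_len h; rewrite e => /eqP; rewrite addn_eq0 => /andP [_].
by rewrite cards_eq0 => /eqP.
Qed.

Lemma inj_main k : forall w, inW w -> (len w <= k)%N ->
  forall T1 T2, Tw Phi g w T1 -> Tw Phi g w T2 -> Pm T1 = Pm T2 -> T1 = T2.
Proof.
elim: k => [|k IH] w hw hk T1 T2 h1 h2 e.
  have l0 : len w = 0%N by apply/eqP; rewrite -leqn0.
  by rewrite (Tw_len0 h1 l0) (Tw_len0 h2 l0).
have [l0|lnz] := eqVneq (len w) 0%N.
  by rewrite (Tw_len0 h1 l0) (Tw_len0 h2 l0).
have lp : (0 < len w)%N by rewrite lt0n.
have [al sal hn] := first_simple hg hw lp.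
have hal := simple_root sal; have nal := root_nz hal.
have hw' : inW (refl al *m w) by apply: inWs.
have hk' : (len (refl al *m w) <= k)%N.
  have := len_step hw sal hn; move: hk.
  move: (len w) (len (refl al *m w)) => A B; lia.
case: (boolP [exists a in T1, val a == al]) => [ex1|nex1];
  case: (boolP [exists a in T2, val a == al]) => [ex2|nex2].
- case/existsP: ex1 => a1 /andP [ha1 /eqP ea1].
  case/existsP: ex2 => a2 /andP [ha2 /eqP ea2].
  have ea : a2 = a1 by apply: val_inj; rewrite ea1 ea2.
  subst a2 al.
  have [t1 p1] := remove_prop hw sal hn h1 ha1.
  have [t2 p2] := remove_prop hw sal hn h2 ha2.
  have e' : Pm (T1 :\ a1) = Pm (T2 :\ a1).
    have := congr1 (mulmx (refl (val a1))) e; rewrite p1 p2 !mulmxA refl_invol //.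
    by rewrite !mul1mx.
  by rewrite -(setD1K ha1) -(setD1K ha2) (IH _ hw' hk' _ _ t1 t2 e').
- exfalso; apply: (caseA hw sal hn h1 h2 e).
    by case/existsP: ex1 => a /andP [ha /eqP ea]; exists a.
  move=> b hb; move/existsPn: nex2 => /(_ b); rewrite hb /=; exact.
- exfalso; apply: (caseA hw sal hn h2 h1 (esym e)).
    by case/existsP: ex2 => a /andP [ha /eqP ea]; exists a.
  move=> b hb; move/existsPn: nex1 => /(_ b); rewrite hb /=; exact.
have hne1 : forall b, b \in T1 -> val b != al.
  move=> b hb; move/existsPn: nex1 => /(_ b); rewrite hb /=; exact.
have hne2 : forall b, b \in T2 -> val b != al.
  move=> b hb; move/existsPn: nex2 => /(_ b); rewrite hb /=; exact.
have t1 := conj_prop hw sal hn h1 hne1.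
have t2 := conj_prop hw sal hn h2 hne2.
have e' : Pm (rf al @: T1) = Pm (rf al @: T2).
  by rewrite !Pm_rf // ?e //; [exact: Tw_orth h2|exact: Tw_orth h1].
have E := IH _ hw' hk' _ _ t1 t2 e'.
apply/setP => x; rewrite -(mem_imset _ _ (rf_inj hal)) E mem_imset //.
exact: rf_inj hal.
Qed.

End Main.

Unset Implicit Arguments.

Theorem mainTheorem16 (R : realFieldType) (n : nat) (Phi : rootSystem R n)
  (g : 'cV[R]_n) (hg : forall a, a \in rs_roots Phi -> dot g a != 0)
  (w : 'M[R]_n) (hw : inW Phi w) :
  (* injective on T^w *)
  (forall T1 T2 : {set rsroot Phi}, Tw Phi g w T1 -> Tw Phi g w T2 ->
      wTheta Phi w T1 = wTheta Phi w T2 -> T1 = T2) /\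
  (* onto W^w *)
  (forall u, Ww Phi g w u -> exists T, Tw Phi g w T /\ u = wTheta Phi w T) /\
  (* order reversing: inclusion vs Bruhat order *)
  (forall T1 T2 : {set rsroot Phi}, Tw Phi g w T1 -> Tw Phi g w T2 ->
      T1 \subset T2 -> bruhat_le Phi g (wTheta Phi w T2) (wTheta Phi w T1)).
Proof.
split; [|split].
- move=> T1 T2 h1 h2 e; apply: (inj_main hg hw (leqnn _) h1 h2).
  move: e; rewrite !wThetaE => e.
  have := congr1 (mulmx^~ w^T) e; rewrite /= -!mulmxA (orthmC (inW_orthm hw)).
  by rewrite !mulmx1.
- by move=> u [T hT]; exists T.
- move=> T1 T2 h1 h2 hs; apply: order_rev => //; first exact: Tw_orth h2.
  by case: h2.
Qed.
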